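(* Let $S$ be a nontrivial subdirectly irreducible member of $\mathsf V(S_7)$. Then $S$ is a flat semiring with zero $0$, it has a least multiplicative ideal $I$ among the ideals different from $\{0\}$, and: $I$ has exactly two elements; $E(S)$ has at most two elements; if $|E(S)|=1$ then $S\in\mathbf N$; and if $|E(S)|=2$ then either $S$ is isomorphic to $M_2$ or $S$ contains a subsemiring isomorphic to $S_7$.
   Context: A flat semiring is an ai-semiring (semilattice $(S,+)$, semigroup $(S,\cdot)$, distributive laws) whose multiplicative reduct has a zero element $0$ and in which $x+y=0$ for all distinct $x,y$. $S_7$ is the ai-semiring on $\{\infty,a,1\}$ with $x+x=x$, $x+y=\infty$ for $x\neq y$, and commutative multiplication with $\infty$ a zero, $a\cdot a=\infty$, $a\cdot 1=a$, $1\cdot1=1$; $\mathsf V(S_7)$ is the variety it generates. $M_2$ is the two-element flat semiring $\{1,0\}$ with $1\cdot1=1$. $E(S)$ denotes the set of multiplicative idempotents of $S$. $\mathbf N$ denotes the subvariety of $\mathsf V(S_7)$ defined by the identity $x^2y\approx x^2$. A multiplicative ideal is a subset $J$ with $SJ\cup JS\subseteq J$. *)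

(* Defs.v *)
Record Ops := mkOps { car :> Type; add : car -> car -> car; mul : car -> car -> car }.

Definition is_ai_semiring (S : Ops) : Prop :=
  (forall x y z : S, add S x (add S y z) = add S (add S x y) z) /\
  (forall x y : S, add S x y = add S y x) /\
  (forall x : S, add S x x = x) /\
  (forall x y z : S, mul S x (mul S y z) = mul S (mul S x y) z) /\
  (forall x y z : S, mul S x (add S y z) = add S (mul S x y) (mul S x z)) /\
  (forall x y z : S, mul S (add S x y) z = add S (mul S x z) (mul S y z)).

Inductive term : Type :=
| Var : nat -> term
| TAdd : term -> term -> term
| TMul : term -> term -> term.

Fixpoint eval (S : Ops) (v : nat -> S) (t : term) : S :=
  match t with
  | Var n => v n
  | TAdd p q => add S (eval S v p) (eval S v q)
  | TMul p q => mul S (eval S v p) (eval S v q)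
  end.

Definition satisfies (S : Ops) (p q : term) : Prop :=
  forall v : nat -> S, eval S v p = eval S v q.

Inductive s7 : Type := S7inf | S7a | S7one.

Definition s7_eqb (x y : s7) : bool :=
  match x, y with
  | S7inf, S7inf | S7a, S7a | S7one, S7one => true
  | _, _ => false
  end.

Definition s7_add (x y : s7) : s7 := if s7_eqb x y then x else S7inf.

Definition s7_mul (x y : s7) : s7 :=
  match x, y with
  | S7one, S7one => S7one
  | S7a, S7one | S7one, S7a => S7a
  | _, _ => S7inf
  end.

Definition S7 : Ops := mkOps s7 s7_add s7_mul.

Inductive m2 : Type := M2one | M2zero.

Definition m2_add (x y : m2) : m2 :=
  match x, y with M2one, M2one => M2one | _, _ => M2zero end.

Definition m2_mul (x y : m2) : m2 :=
  match x, y with M2one, M2one => M2one | _, _ => M2zero end.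

Definition M2 : Ops := mkOps m2 m2_add m2_mul.

(* Membership in the variety V(S_7) generated by S_7: S satisfies every identity
   of S_7 (by Birkhoff's HSP theorem this is V(S_7) = HSP(S_7)). *)
Definition in_VS7 (S : Ops) : Prop :=
  forall p q : term, satisfies S7 p q -> satisfies S p q.

Definition in_N (S : Ops) : Prop :=
  in_VS7 S /\
  satisfies S (TMul (TMul (Var 0) (Var 0)) (Var 1)) (TMul (Var 0) (Var 0)).

Definition congruence (S : Ops) (R : S -> S -> Prop) : Prop :=
  (forall x, R x x) /\ (forall x y, R x y -> R y x) /\
  (forall x y z, R x y -> R y z -> R x z) /\
  (forall x y u w, R x y -> R u w -> R (add S x u) (add S y w)) /\
  (forall x y u w, R x y -> R u w -> R (mul S x u) (mul S y w)).

Definition nontrivial (S : Ops) : Prop := exists x y : S, x <> y.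

Definition subdirectly_irreducible (S : Ops) : Prop :=
  nontrivial S /\
  exists a b : S, a <> b /\
    forall R, congruence S R -> (exists x y, R x y /\ x <> y) -> R a b.

Definition is_hom (S T : Ops) (f : S -> T) : Prop :=
  (forall x y, f (add S x y) = add T (f x) (f y)) /\
  (forall x y, f (mul S x y) = mul T (f x) (f y)).

Definition isomorphic (S T : Ops) : Prop :=
  exists f : S -> T, is_hom S T f /\
    (forall x y, f x = f y -> x = y) /\ (forall z, exists x, f x = z).

Definition contains_copy_of (S T : Ops) : Prop :=
  exists f : T -> S, is_hom T S f /\ (forall x y, f x = f y -> x = y).

Definition is_mul_zero (S : Ops) (z : S) : Prop :=
  forall x, mul S z x = z /\ mul S x z = z.

Definition flat_with_zero (S : Ops) (z : S) : Prop :=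
  is_ai_semiring S /\ is_mul_zero S z /\
  (forall x y : S, x <> y -> add S x y = z).

Definition mul_ideal (S : Ops) (J : S -> Prop) : Prop :=
  (exists x, J x) /\ (forall s x, J x -> J (mul S s x) /\ J (mul S x s)).

Definition idem (S : Ops) (e : S) : Prop := mul S e e = e.

(* Main.v *)
Require Import Defs.
From Stdlib Require Import Classical ClassicalEpsilon.

Local Notation "x ⊕ y" := (add _ x y) (at level 50, left associativity).
Local Notation "x ⊗ y" := (mul _ x y) (at level 40, left associativity).

Record Ax (S : Ops) : Prop := {
 aA : forall x y z : S, x ⊕ (y ⊕ z) = x ⊕ y ⊕ z;
 aC : forall x y : S, x ⊕ y = y ⊕ x;
 aI : forall x : S, x ⊕ x = x;
 mA : forall x y z : S, x ⊗ (y ⊗ z) = x ⊗ y ⊗ z;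
 mC : forall x y : S, x ⊗ y = y ⊗ x;
 dL : forall x y z : S, x ⊗ (y ⊕ z) = x ⊗ y ⊕ x ⊗ z;
 cube : forall x : S, x ⊗ (x ⊗ x) = x ⊗ x;
 q2 : forall x y : S, x ⊗ x ⊕ y = (x ⊗ x) ⊗ (y ⊗ y);
 q4 : forall x y : S, (x ⊗ x) ⊗ y ⊕ y = (x ⊗ x) ⊗ y;
 abs1 : forall x y z : S, x ⊕ y ⊕ x ⊗ z = x ⊕ y ⊕ y ⊗ z;
 abs2 : forall x y z w : S, (x ⊕ y) ⊗ z ⊕ x ⊗ w = (x ⊕ y) ⊗ z ⊕ y ⊗ w;
 abs3 : forall x y z : S, (x ⊕ y) ⊗ z ⊕ x = (x ⊕ y) ⊗ z ⊕ y;
 sqadd : forall x y : S, (x ⊕ y) ⊗ (x ⊕ y) = (x ⊗ x) ⊗ (y ⊗ y);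
 sqmul : forall x y : S, (x ⊗ y) ⊗ (x ⊗ y) = (x ⊗ x) ⊗ (y ⊗ y);
 sqid : forall x : S, (x ⊗ x) ⊗ (x ⊗ x) = x ⊗ x;
 lesq : forall x : S, x ⊕ x ⊗ x = x ⊗ x;
 r1 : forall x y z : S, x ⊗ (y ⊗ z) = (x ⊗ z) ⊗ y;
 r2 : forall x y z : S, x ⊗ (y ⊗ z) = y ⊗ (x ⊗ z)
}.

Definition env {S : Ops} (x y z w : S) : nat -> S :=
  fun n => match n with 0 => x | 1 => y | 2 => z | _ => w end.

Ltac s7id := let v := fresh "v" in intro v; simpl;
  destruct (v 0); destruct (v 1); destruct (v 2); destruct (v 3); reflexivity.

Ltac useid HV p q x y z w := exact (HV p q ltac:(s7id) (env x y z w)).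

Definition X0 := Var 0. Definition X1 := Var 1. Definition X2 := Var 2. Definition X3 := Var 3.

Lemma getAx (S : Ops) (HV : in_VS7 S) : Ax S.
Proof.
  constructor.
  - intros x y z. useid HV (TAdd X0 (TAdd X1 X2)) (TAdd (TAdd X0 X1) X2) x y z x.
  - intros x y. useid HV (TAdd X0 X1) (TAdd X1 X0) x y x x.
  - intros x. useid HV (TAdd X0 X0) X0 x x x x.
  - intros x y z. useid HV (TMul X0 (TMul X1 X2)) (TMul (TMul X0 X1) X2) x y z x.
  - intros x y. useid HV (TMul X0 X1) (TMul X1 X0) x y x x.
  - intros x y z. useid HV (TMul X0 (TAdd X1 X2)) (TAdd (TMul X0 X1) (TMul X0 X2)) x y z x.
  - intros x. useid HV (TMul X0 (TMul X0 X0)) (TMul X0 X0) x x x x.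
  - intros x y. useid HV (TAdd (TMul X0 X0) X1) (TMul (TMul X0 X0) (TMul X1 X1)) x y x x.
  - intros x y. useid HV (TAdd (TMul (TMul X0 X0) X1) X1) (TMul (TMul X0 X0) X1) x y x x.
  - intros x y z. useid HV (TAdd (TAdd X0 X1) (TMul X0 X2)) (TAdd (TAdd X0 X1) (TMul X1 X2)) x y z x.
  - intros x y z w. useid HV (TAdd (TMul (TAdd X0 X1) X2) (TMul X0 X3)) (TAdd (TMul (TAdd X0 X1) X2) (TMul X1 X3)) x y z w.
  - intros x y z. useid HV (TAdd (TMul (TAdd X0 X1) X2) X0) (TAdd (TMul (TAdd X0 X1) X2) X1) x y z x.
  - intros x y. useid HV (TMul (TAdd X0 X1) (TAdd X0 X1)) (TMul (TMul X0 X0) (TMul X1 X1)) x y x x.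
  - intros x y. useid HV (TMul (TMul X0 X1) (TMul X0 X1)) (TMul (TMul X0 X0) (TMul X1 X1)) x y x x.
  - intros x. useid HV (TMul (TMul X0 X0) (TMul X0 X0)) (TMul X0 X0) x x x x.
  - intros x. useid HV (TAdd X0 (TMul X0 X0)) (TMul X0 X0) x x x x.
  - intros x y z. useid HV (TMul X0 (TMul X1 X2)) (TMul (TMul X0 X2) X1) x y z x.
  - intros x y z. useid HV (TMul X0 (TMul X1 X2)) (TMul X1 (TMul X0 X2)) x y z x.
Qed.

Definition le {S : Ops} (x y : S) : Prop := x ⊕ y = y.

Definition ctx {S : Ops} (k : option S) (x : S) : S :=
  match k with None => x | Some k => k ⊗ x end.

Definition Rc {S : Ops} (c x y : S) : Prop :=
  forall k : option S, le (ctx k x) c <-> le (ctx k y) c.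

Lemma le_refl S (H : Ax S) (x : S) : le x x.
Proof. apply (aI S H). Qed.

Lemma le_trans S (H : Ax S) (x y w : S) : le x y -> le y w -> le x w.
Proof. unfold le; intros H1 H2. rewrite <- H2, (aA S H), H1. reflexivity. Qed.

Lemma le_antisym S (H : Ax S) (x y : S) : le x y -> le y x -> x = y.
Proof. unfold le; intros H1 H2. rewrite <- H1, (aC S H). symmetry; exact H2. Qed.

Lemma le_addl S (H : Ax S) (x y : S) : le x (x ⊕ y).
Proof. unfold le. rewrite (aA S H), (aI S H). reflexivity. Qed.

Lemma le_addr S (H : Ax S) (x y : S) : le y (x ⊕ y).
Proof. rewrite (aC S H). apply le_addl; auto. Qed.

Lemma le_join S (H : Ax S) (x y c : S) : le x c -> le y c -> le (x ⊕ y) c.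
Proof. unfold le; intros H1 H2. rewrite <- (aA S H), H2, H1. reflexivity. Qed.

Lemma le_add_iff S (H : Ax S) (x y c : S) : le (x ⊕ y) c <-> le x c /\ le y c.
Proof.
  split.
  - intros H1; split; eapply le_trans; eauto; [apply le_addl | apply le_addr]; auto.
  - intros [H1 H2]; apply le_join; auto.
Qed.

Lemma mul_mono S (H : Ax S) (k x y : S) : le x y -> le (k ⊗ x) (k ⊗ y).
Proof. unfold le; intros H1. rewrite <- (dL S H), H1. reflexivity. Qed.

Lemma ctx_mono S (H : Ax S) k (x y : S) : le x y -> le (ctx k x) (ctx k y).
Proof. destruct k; simpl; auto using mul_mono. Qed.

Lemma ctx_add S (H : Ax S) k (x y : S) : ctx k (x ⊕ y) = ctx k x ⊕ ctx k y.
Proof. destruct k; simpl; auto. apply (dL S H). Qed.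

Lemma ctx_mul S (H : Ax S) k (a b : S) : ctx k (a ⊗ b) = ctx k b ⊗ a.
Proof. destruct k; simpl. apply (r1 S H). apply (mC S H). Qed.

Lemma ctx_mul' S (H : Ax S) k (a b : S) : ctx k (a ⊗ b) = ctx k a ⊗ b.
Proof. destruct k; simpl. apply (mA S H). reflexivity. Qed.

Lemma Rc_cong S (H : Ax S) (c : S) : congruence S (Rc c).
Proof.
  unfold Rc; split; [|split; [|split; [|split]]].
  - intros x k; tauto.
  - intros x y H1 k; specialize (H1 k); tauto.
  - intros x y z H1 H2 k; specialize (H1 k); specialize (H2 k); tauto.
  - intros x y u w H1 H2 k. rewrite !(ctx_add S H), !(le_add_iff S H).
    specialize (H1 k); specialize (H2 k); tauto.
  - intros x y u w H1 H2 k.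
    rewrite (ctx_mul S H k x u).
    change (ctx k u ⊗ x) with (ctx (Some (ctx k u)) x).
    rewrite (H1 (Some (ctx k u))). simpl.
    rewrite <- (ctx_mul S H k y u), (ctx_mul' S H k y u).
    change (ctx k y ⊗ u) with (ctx (Some (ctx k y)) u).
    rewrite (H2 (Some (ctx k y))). simpl.
    rewrite <- (ctx_mul' S H). tauto.
Qed.

Lemma kappa_cong S (H : Ax S) : congruence S (fun x y => x ⊗ x = y ⊗ y).
Proof.
  split; [|split; [|split; [|split]]].
  - reflexivity.
  - intros; symmetry; auto.
  - intros x y z H1 H2; congruence.
  - intros x y u w H1 H2. rewrite !(sqadd S H), H1, H2. reflexivity.
  - intros x y u w H1 H2. rewrite !(sqmul S H), H1, H2. reflexivity.
Qed.

Lemma c_min S (H : Ax S) (c : S) (HD : forall x y, Rc c x y -> x = y) :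
  forall x, le x c -> x = c.
Proof.
  intros x Hx. apply HD. intros k. split; intro hk.
  - destruct k as [k|]; simpl in *; [|apply le_refl; auto].
    pose proof (abs1 S H x c k) as E. unfold le in Hx. rewrite Hx in E.
    unfold le in *. rewrite (mC S H x k), (aC S H c (k ⊗ x)), hk in E.
    rewrite (aC S H), (mC S H). symmetry; exact E.
  - eapply le_trans; eauto. apply ctx_mono; auto.
Qed.

Lemma zero_of_empty S (H : Ax S) (c z : S) (HD : forall x y, Rc c x y -> x = y)
  (Hz : forall k, ~ le (ctx k z) c) :
  (forall x, z ⊗ x = z) /\ (forall x, x ⊕ z = z).
Proof.
  split; intro x; apply HD; intro k; split; intro h; exfalso.
  - rewrite (ctx_mul S H) in h. apply (Hz (Some (ctx k x))). exact h.
  - exact (Hz k h).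
  - rewrite (ctx_add S H), (le_add_iff S H) in h. exact (Hz k (proj2 h)).
  - exact (Hz k h).
Qed.

Lemma nonzero_resid S (H : Ax S) (c z : S) (HD : forall x y, Rc c x y -> x = y)
  (Hz : forall k, ~ le (ctx k z) c) :
  forall u, u <> z -> exists k, ctx k u = c.
Proof.
  intros u Hu. destruct (classic (exists k, le (ctx k u) c)) as [[k Hk]|Hn].
  - exists k. apply (c_min S H c HD). exact Hk.
  - exfalso. apply Hu. apply HD. intro k. split; intro h; exfalso.
    + apply Hn; eauto.
    + exact (Hz k h).
Qed.

Lemma absorb_eq S (H : Ax S) (c : S) (HD : forall x y, Rc c x y -> x = y)
  (x u : S) : le x u -> (exists k0, le (ctx k0 u) c) -> x = u.
Proof.
  intros Hxu [k0 Hk0]. apply HD. intro k. split; intro hx.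
  - destruct k0 as [s|].
    + destruct k as [t|]; simpl in *.
      * pose proof (abs2 S H x u s t) as E. unfold le in Hxu. rewrite Hxu in E.
        assert (L : le (u ⊗ s ⊕ x ⊗ t) c).
        { apply le_join; auto; [rewrite (mC S H); auto | rewrite (mC S H); auto]. }
        rewrite E, (le_add_iff S H) in L. rewrite (mC S H). apply L.
      * pose proof (abs3 S H x u s) as E. unfold le in Hxu. rewrite Hxu in E.
        assert (L : le (u ⊗ s ⊕ x) c).
        { apply le_join; auto; rewrite (mC S H); auto. }
        rewrite E, (le_add_iff S H) in L. apply L.
    + simpl in Hk0. assert (Hu : u = c) by (apply (c_min S H c HD); auto).
      subst u. assert (x = c) by (apply (c_min S H c HD); auto). subst x. exact hx.
  - eapply le_trans; eauto. apply ctx_mono; auto.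
Qed.

Lemma flat_lemma S (H : Ax S) (c z : S) (HD : forall x y, Rc c x y -> x = y)
  (Hz : forall k, ~ le (ctx k z) c) :
  forall x y : S, x <> y -> x ⊕ y = z.
Proof.
  intros x y Hxy. apply NNPP; intro Hn.
  destruct (nonzero_resid S H c z HD Hz _ Hn) as [k Hk].
  assert (E : exists k0, le (ctx k0 (x ⊕ y)) c) by (exists k; rewrite Hk; apply le_refl; auto).
  pose proof (absorb_eq S H c HD x (x ⊕ y) (le_addl S H x y) E) as E1.
  pose proof (absorb_eq S H c HD y (x ⊕ y) (le_addr S H x y) E) as E2.
  apply Hxy. congruence.
Qed.

Lemma idem_c S (H : Ax S) (c z : S) (HR : forall u, u <> z -> exists k, ctx k u = c)
  (e : S) : e ⊗ e = e -> e <> z -> e ⊗ c = c.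
Proof.
  intros He Hez. destruct (HR e Hez) as [[k|] Hk]; simpl in Hk.
  - rewrite <- Hk, (r2 S H), He. reflexivity.
  - subst e. exact He.
Qed.

Lemma idem_uniq S (H : Ax S) (c z : S) (HR : forall u, u <> z -> exists k, ctx k u = c)
  (Hzm : forall x, z ⊗ x = z) (Hcz : c <> z) (Hflat : forall x y : S, x <> y -> x ⊕ y = z)
  (e f : S) : e ⊗ e = e -> f ⊗ f = f -> e <> z -> f <> z -> e = f.
Proof.
  intros He Hf Hez Hfz. apply NNPP; intro Hne.
  pose proof (Hflat e f Hne) as E. pose proof (q2 S H e f) as Q.
  rewrite He, Hf, E in Q.
  assert (C : (e ⊗ f) ⊗ c = c).
  { rewrite <- (mA S H), (idem_c S H c z HR f Hf Hfz), (idem_c S H c z HR e He Hez). reflexivity. }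
  rewrite <- Q, Hzm in C. auto.
Qed.

Lemma ideal_c S (H : Ax S) (c z : S) (HR : forall u, u <> z -> exists k, ctx k u = c)
  (Hzm : forall x, z ⊗ x = z) (Hcz : c <> z) (Hflat : forall x y : S, x <> y -> x ⊕ y = z)
  (k : S) : k ⊗ c = c \/ k ⊗ c = z.
Proof.
  apply NNPP; intro Hn. apply not_or_and in Hn. destruct Hn as [H1 H2].
  destruct (HR _ H2) as [[m|] Hm]; simpl in Hm; [|contradiction].
  assert (Hkk : k ⊗ k <> z).
  { intro Hkk. assert (P : (m ⊗ k) ⊗ c = c) by (rewrite <- (mA S H); exact Hm).
    assert (P2 : ((m ⊗ k) ⊗ (m ⊗ k)) ⊗ c = c) by (rewrite <- (mA S H), P, P; reflexivity).
    rewrite (sqmul S H), Hkk, (mC S H (m ⊗ m) z), Hzm, Hzm in P2. auto. }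
  assert (Hk : k = k ⊗ k).
  { apply NNPP; intro Hne. apply Hkk. rewrite <- (Hflat _ _ Hne). symmetry. apply (lesq S H). }
  apply H1. apply (idem_c S H c z HR k).
  - symmetry; exact Hk.
  - intro Hkz. apply Hkk. rewrite Hkz, Hzm. reflexivity.
Qed.

Lemma idem_one S (H : Ax S) (c z : S) (HR : forall u, u <> z -> exists k, ctx k u = c)
  (Hzm : forall x, z ⊗ x = z) (Hcz : c <> z) (Hflat : forall x y : S, x <> y -> x ⊕ y = z)
  (e : S) : e ⊗ e = e -> e <> z -> forall u, e ⊗ u = u.
Proof.
  intros He Hez u. pose proof (q4 S H e u) as Q. rewrite He in Q.
  apply NNPP; intro Hne. rewrite (Hflat _ _ Hne) in Q.
  assert (Huz : u <> z). { intro; subst u. apply Hne. rewrite (mC S H). apply Hzm. }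
  pose proof (idem_c S H c z HR e He Hez) as Ec.
  destruct (HR u Huz) as [[k|] Hk]; simpl in Hk.
  - apply Hcz. rewrite <- Ec, <- Hk, (r2 S H), <- Q, (mC S H). apply Hzm.
  - subst u. apply Hcz. rewrite <- Ec. symmetry; exact Q.
Qed.

Lemma main_flat (S : Ops) (HS : is_ai_semiring S) (HV : in_VS7 S) (H : Ax S) (c z : S)
  (HR : forall u, u <> z -> exists k, ctx k u = c)
  (Hzm : forall x, z ⊗ x = z) (Hzt : forall x, x ⊕ z = z) (Hcz : c <> z)
  (Hflat : forall x y : S, x <> y -> x ⊕ y = z) :
    flat_with_zero S z /\
    (exists I : S -> Prop,
       mul_ideal S I /\ ~ (forall x, I x <-> x = z) /\
       (forall J : S -> Prop, mul_ideal S J -> ~ (forall x, J x <-> x = z) ->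
          forall x, I x -> J x) /\
       (exists a b : S, a <> b /\ forall x, I x <-> (x = a \/ x = b))) /\
    (forall e1 e2 e3 : S, idem S e1 -> idem S e2 -> idem S e3 ->
       e1 = e2 \/ e1 = e3 \/ e2 = e3) /\
    ((exists e : S, forall x, idem S x <-> x = e) -> in_N S) /\
    ((exists e1 e2 : S, e1 <> e2 /\ forall x, idem S x <-> (x = e1 \/ x = e2)) ->
       isomorphic S M2 \/ contains_copy_of S S7).
Proof.
  assert (Hzm' : forall x, x ⊗ z = z) by (intro x; rewrite (mC S H); apply Hzm).
  assert (Hzt' : forall x, z ⊕ x = z) by (intro x; rewrite (aC S H); apply Hzt).
  pose proof (idem_uniq S H c z HR Hzm Hcz Hflat) as Huniq.
  split; [|split; [|split; [|split]]].
  - split; auto. split; auto. intro x; split; auto.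
  - exists (fun x => x = c \/ x = z). split; [|split; [|split]].
    + split; [exists c; auto|]. intros s x [->| ->].
      * pose proof (ideal_c S H c z HR Hzm Hcz Hflat s). rewrite (mC S H c s). tauto.
      * rewrite Hzm, Hzm'. tauto.
    + intro Hn. apply Hcz. apply Hn. auto.
    + intros J [[j Hj] HJ] HnJ x Ix.
      assert (Jz : J z) by (rewrite <- (Hzm j); apply (HJ z j Hj)).
      assert (Hex : exists j, J j /\ j <> z).
      { apply NNPP; intro Hn. apply HnJ. intro y; split; intro Hy.
        - apply NNPP; intro Hyz. apply Hn; eauto.
        - subst; auto. }
      destruct Hex as [j' [Hj' Hj'z]].
      assert (Jc : J c).
      { destruct (HR j' Hj'z) as [[k|] Hk]; simpl in Hk; subst; auto. apply (HJ k j' Hj'). }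
      destruct Ix; subst; auto.
    + exists c, z. split; auto. tauto.
  - intros e1 e2 e3 H1 H2 H3. unfold idem in *.
    destruct (classic (e1 = z)), (classic (e2 = z)), (classic (e3 = z)); subst; auto;
      try (left; apply Huniq; auto; fail); try (right; left; apply Huniq; auto; fail);
      right; right; apply Huniq; auto.
  - intros [e He]. assert (Ez : z = e) by (apply He; unfold idem; apply Hzm).
    assert (Hsq : forall x, x ⊗ x = z) by (intro x; rewrite Ez; apply He; unfold idem; apply (sqid S H)).
    split; auto. intro v. simpl. rewrite Hsq, Hzm. reflexivity.
  - intros [e1 [e2 [Hne He]]].
    assert (Hex : exists e, idem S e /\ e <> z).
    { destruct (classic (e1 = z)).
      - exists e2. split; [apply He; auto|]. intro; subst; auto.
      - exists e1. split; [apply He; auto|auto]. }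
    destruct Hex as [e [Hei Hez]]. unfold idem in Hei.
    pose proof (idem_one S H c z HR Hzm Hcz Hflat e Hei Hez) as Hone.
    destruct (classic (exists w, w <> z /\ w <> e)) as [[w [Hwz Hwe]]|Hno].
    + right.
      assert (Hww : w ⊗ w = z).
      { apply NNPP; intro Hn.
        assert (We : w ⊗ w = e) by (apply Huniq; auto; apply (sqid S H)).
        pose proof (q2 S H e w) as Q. rewrite Hei, We, Hei in Q.
        apply Hez. rewrite <- Q. apply Hflat. auto. }
      exists (fun t => match t with S7inf => z | S7a => w | S7one => e end).
      split; [split|].
      * intros x y; destruct x, y; simpl; symmetry;
          first [ apply (aI S H) | apply Hzt | apply Hzt' | apply Hflat; auto ].
      * intros x y; destruct x, y; simpl; symmetry;
          first [ apply Hzm | apply Hzm' | exact Hww | exact Hei | apply Hone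
                | rewrite (mC S H); apply Hone ].
      * intros x y; destruct x, y; simpl; intro Hxy; auto; exfalso; congruence.
    + left.
      assert (Hall : forall x, x = z \/ x = e).
      { intro x. apply NNPP; intro Hn. apply Hno. exists x. apply not_or_and in Hn. tauto. }
      exists (fun x => if excluded_middle_informative (x = e) then M2one else M2zero).
      assert (fz : (if excluded_middle_informative (z = e) then M2one else M2zero) = M2zero).
      { destruct (excluded_middle_informative (z = e)); auto. exfalso; auto. }
      assert (fe : (if excluded_middle_informative (e = e) then M2one else M2zero) = M2one).
      { destruct (excluded_middle_informative (e = e)); auto. exfalso; auto. }
      assert (ee : e ⊕ e = e) by apply (aI S H).
      assert (ez : e ⊕ z = z) by apply Hzt.
      assert (ze : z ⊕ e = z) by apply Hzt'.
      assert (zz : z ⊕ z = z) by apply Hzt.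
      split; [split|split].
      * intros x y. destruct (Hall x), (Hall y); subst;
          rewrite ?ee, ?ez, ?ze, ?zz, ?fz, ?fe; reflexivity.
      * intros x y. destruct (Hall x), (Hall y); subst;
          rewrite ?Hei, ?Hzm, ?Hzm', ?fz, ?fe; reflexivity.
      * intros x y. destruct (Hall x), (Hall y); subst; rewrite ?fz, ?fe; auto; discriminate.
      * intros [|]; [exists e | exists z]; auto.
Qed.

Theorem theorem3p6 (S : Ops) :
  is_ai_semiring S -> in_VS7 S -> subdirectly_irreducible S ->
  exists z : S,
    flat_with_zero S z /\
    (exists I : S -> Prop,
       mul_ideal S I /\ ~ (forall x, I x <-> x = z) /\
       (forall J : S -> Prop, mul_ideal S J -> ~ (forall x, J x <-> x = z) ->
          forall x, I x -> J x) /\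
       (exists a b : S, a <> b /\ forall x, I x <-> (x = a \/ x = b))) /\
    (forall e1 e2 e3 : S, idem S e1 -> idem S e2 -> idem S e3 ->
       e1 = e2 \/ e1 = e3 \/ e2 = e3) /\
    ((exists e : S, forall x, idem S x <-> x = e) -> in_N S) /\
    ((exists e1 e2 : S, e1 <> e2 /\ forall x, idem S x <-> (x = e1 \/ x = e2)) ->
       isomorphic S M2 \/ contains_copy_of S S7).
Proof.
  intros HS HV HSI. pose proof (getAx S HV) as H.
  destruct HSI as [_ [a [b [Hab HSI]]]].
  assert (Hcd : exists c d : S, c <> d /\ ~ le d c /\
            forall R, congruence S R -> (exists x y, R x y /\ x <> y) -> R c d).
  { destruct (classic (le a b)) as [Hle|Hle].
    - exists a, b. split; auto. split; auto.
      intro Hba. apply Hab. apply (le_antisym S H); auto.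
    - exists b, a. split; auto. split; auto.
      intros R HR HN. pose proof HR as HR'. destruct HR' as [_ [Hsym _]]. apply Hsym. apply HSI; auto. }
  destruct Hcd as [c [d [Hcd [Hdc HSI']]]].
  assert (HD : forall x y, Rc c x y -> x = y).
  { intros x y Hxy. apply NNPP; intro Hne.
    assert (Rcd : Rc c c d) by (apply (HSI' (Rc c)); [apply Rc_cong; auto | exists x, y; auto]).
    apply Hdc. apply (Rcd None). simpl. apply le_refl; auto. }
  pose proof (c_min S H c HD) as Hmin.
  assert (Hz : exists z, forall k, ~ le (ctx k z) c).
  { destruct (classic (c ⊗ c = c)) as [Hcc|Hcc].
    - exists d.
      assert (Hk : forall x y : S, x ⊗ x = y ⊗ y -> x = y).
      { intros x y Hxy. apply NNPP; intro Hne.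
        assert (K : c ⊗ c = d ⊗ d)
          by (apply (HSI' _ (kappa_cong S H)); exists x, y; auto).
        apply Hdc. unfold le. pose proof (lesq S H d) as L.
        rewrite <- K, Hcc in L. exact L. }
      assert (Hid : forall x : S, x ⊗ x = x) by (intro x; apply Hk; apply (sqid S H)).
      assert (Hplus : forall x y : S, x ⊕ y = x ⊗ y).
      { intros x y. pose proof (q2 S H x y) as Q. rewrite !Hid in Q. exact Q. }
      intros [k|] Hk'; simpl in Hk'.
      + apply Hmin in Hk'. rewrite <- Hplus in Hk'. apply Hdc.
        rewrite <- Hk'. apply le_addr; auto.
      + auto.
    - exists (c ⊗ c). intros [k|] Hk; simpl in Hk; apply Hmin in Hk.
      + apply Hcc.
        assert (E : (c ⊗ c) ⊗ c = c).
        { assert (E0 : (c ⊗ c) ⊗ (k ⊗ (c ⊗ c)) = k ⊗ (c ⊗ c))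
            by (rewrite (r2 S H), (sqid S H); reflexivity).
          rewrite Hk in E0. exact E0. }
        rewrite (mC S H), (cube S H) in E. exact E.
      + auto. }
  destruct Hz as [z Hz].
  destruct (zero_of_empty S H c z HD Hz) as [Hzm Hzt].
  assert (Hcz : c <> z).
  { intro E. apply (Hz None). simpl. rewrite E. apply le_refl; auto. }
  exists z.
  apply (main_flat S HS HV H c z (nonzero_resid S H c z HD Hz) Hzm Hzt Hcz
           (flat_lemma S H c z HD Hz)).
Qed.
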